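(* Let $\gamma>0$. For a multiset $S=\{G_1,\dots,G_N\}$ of $N\ge 2$ elements equipped with a nonnegative symmetric distance $D$, define the Energy diversity $$\mathrm{div}(S) = -\frac{1}{N(N-1)}\sum_{i\neq j}\frac{1}{D(G_i,G_j)^{\gamma}},$$ with the convention $1/0=+\infty$ (so $\mathrm{div}(S)=-\infty$ whenever two elements are at distance $0$). Then Energy satisfies both the monotonicity property and the uniqueness property.
   Context: Monotonicity: whenever $S,S'$ are multisets each consisting of $N$ distinct elements and $g:S\to S'$ is a bijection with $D(G_i,G_j)\le D(g(G_i),g(G_j))$ for all $G_i,G_j\in S$, with strict inequality for at least one pair, then $\mathrm{div}(S)<\mathrm{div}(S')$. Uniqueness: whenever $S$ consists of $N$ distinct elements $G_1,\dots,G_N$ and $S_{ij}=(S\setminus\{G_i\})\cup\{G_j\}$ for $j\neq i$ (i.e. $G_i$ is removed and a second copy of $G_j$ is added), then $\mathrm{div}(S)>\mathrm{div}(S_{ij})$. Here distinct elements are assumed to be at positive distance from each other. *)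

(* Defs.v *)
From HB Require Import structures.
From mathcomp Require Import all_boot all_order all_algebra all_fingroup.
From mathcomp Require Import all_classical all_reals all_analysis.
Set Implicit Arguments. Unset Strict Implicit. Unset Printing Implicit Defensive.
Import Order.TTheory GRing.Theory Num.Theory.
Local Open Scope ring_scope.

Definition energy_term (R : realType) (gamma : R) (d : R) : \bar R :=
  if d == 0 then +oo%E else ((d `^ gamma)^-1)%:E.

Definition energy_div (R : realType) (gamma : R) (X : Type) (D : X -> X -> R)
  (N : nat) (G : 'I_N -> X) : \bar R :=
  (- ((((N * (N - 1))%:R)^-1)%:E *
      \sum_(i < N) \sum_(j < N | j != i) energy_term gamma (D (G i) (G j))))%E.

Definition distinct_fam (R : realType) (X : Type) (D : X -> X -> R)
  (N : nat) (G : 'I_N -> X) : Prop :=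
  forall i j : 'I_N, i != j -> 0 < D (G i) (G j).

(* A bijection g : S -> S' between multisets of distinct elements is given by
   a permutation s of the indices: g (G i) = G' (s i). *)
Definition monotonicity (R : realType) (X : Type) (D : X -> X -> R) (N : nat)
  (div : ('I_N -> X) -> \bar R) : Prop :=
  forall (G G' : 'I_N -> X) (s : 'S_N),
    distinct_fam D G -> distinct_fam D G' ->
    (forall i j : 'I_N, D (G i) (G j) <= D (G' (s i)) (G' (s j))) ->
    (exists i j : 'I_N, D (G i) (G j) < D (G' (s i)) (G' (s j))) ->
    (div G < div G')%E.

Definition uniqueness (R : realType) (X : Type) (D : X -> X -> R) (N : nat)
  (div : ('I_N -> X) -> \bar R) : Prop :=
  forall (G : 'I_N -> X) (i j : 'I_N),
    distinct_fam D G -> j != i ->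
    (div (fun k => if k == i then G j else G k) < div G)%E.

(* Main.v *)
Require Import Defs.
From HB Require Import structures.
From mathcomp Require Import all_boot all_order all_algebra all_fingroup.
From mathcomp Require Import all_classical all_reals all_analysis.
Import Order.TTheory GRing.Theory Num.Theory.
Set Implicit Arguments. Unset Strict Implicit. Unset Printing Implicit Defensive.
Local Open Scope ring_scope.

Definition ereal_term (R : realType) (gamma d : R) : R := (d `^ gamma)^-1.

Lemma et_pos (R : realType) (gamma d : R) : 0 < d ->
  energy_term gamma d = (ereal_term gamma d)%:E.
Proof. by move=> d0; rewrite /energy_term gt_eqF. Qed.

Lemma et_ge0 (R : realType) (gamma d : R) : (0 <= energy_term gamma d)%E.
Proof.
rewrite /energy_term; case: ifP => _ //; rewrite lee_fin invr_ge0 powR_ge0 //.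
Qed.

Lemma et_lt (R : realType) (gamma x y : R) : 0 < gamma -> 0 < x -> x < y ->
  ereal_term gamma y < ereal_term gamma x.
Proof.
move=> g0 x0 xy; have y0 : 0 < y by apply: lt_trans xy.
rewrite /ereal_term ltf_pV2 ?posrE ?powR_gt0 //.
by apply: gt0_ltr_powR => //; rewrite nnegrE ltW.
Qed.

Lemma et_le (R : realType) (gamma x y : R) : 0 < gamma -> 0 < x -> x <= y ->
  ereal_term gamma y <= ereal_term gamma x.
Proof.
move=> g0 x0; rewrite le_eqVlt => /orP [/eqP -> //|xy].
by apply/ltW/et_lt.
Qed.

Definition Ssum (R : realType) (gamma : R) (X : Type) (D : X -> X -> R)
  (N : nat) (G : 'I_N -> X) : R :=
  \sum_(i < N) \sum_(j < N | j != i) ereal_term gamma (D (G i) (G j)).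

Lemma div_fin (R : realType) (gamma : R) (X : Type) (D : X -> X -> R)
  (N : nat) (G : 'I_N -> X) : distinct_fam D G ->
  energy_div gamma D G = (- (((N * (N - 1))%:R)^-1 * Ssum gamma D G))%:E.
Proof.
move=> dG; rewrite /energy_div /Ssum.
rewrite (eq_bigr (fun i => (\sum_(j < N | j != i)
   ereal_term gamma (D (G i) (G j)))%:E)); last first.
  move=> i _; rewrite -sumEFin; apply: eq_bigr => j ji.
  by rewrite et_pos // dG // eq_sym.
by rewrite sumEFin.
Qed.

Lemma addyy2 (R : realType) (a b : \bar R) : (0 <= a)%E -> (0 <= b)%E ->
  (+oo + a + b = +oo)%E.
Proof.
move=> a0 b0; rewrite addye; last by rewrite gt_eqF // (lt_le_trans (ltNyr 0)).
by rewrite addye // gt_eqF // (lt_le_trans (ltNyr 0)).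
Qed.

Theorem proposition1 (R : realType) (gamma : R) (X : Type) (D : X -> X -> R)
  (N : nat) :
  0 < gamma -> (2 <= N)%N ->
  (forall x y, 0 <= D x y) -> (forall x y, D x y = D y x) ->
  (forall x, D x x = 0) ->
  monotonicity D (energy_div gamma D (N:=N)) /\
  uniqueness D (energy_div gamma D (N:=N)).
Proof.
move=> g0 N2 Dge0 Dsym D0.
have c0 : 0 < ((N * (N - 1))%:R : R)^-1.
  have hN : (0 < N * (N - 1))%N by case: N N2 => [|[|n]].
  by rewrite invr_gt0 ltr0n.
split.
- move=> G G' s dG dG' Hle [i [j Hlt]].
  have ij : j != i.
    by apply/eqP => eji; move: Hlt; rewrite eji !D0 ltxx.
  rewrite !div_fin // lte_fin ltrN2 ltr_pM2l //.
  have -> : Ssum gamma D G' =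
    \sum_(i < N) \sum_(j < N | j != i) ereal_term gamma (D (G' (s i)) (G' (s j))).
    rewrite /Ssum (reindex_inj (@perm_inj _ s)); apply: eq_bigr => k _.
    rewrite (reindex_inj (@perm_inj _ s)); apply: eq_bigl => l.
    by rewrite (inj_eq (@perm_inj _ s)).
  have Hpt : forall k l : 'I_N, l != k ->
      ereal_term gamma (D (G' (s k)) (G' (s l))) <= ereal_term gamma (D (G k) (G l)).
    by move=> k l lk; apply: et_le => //; rewrite dG // eq_sym.
  rewrite /Ssum (bigD1 i) //= [X in _ < X](bigD1 i) //=.
  apply: ltr_leD; last first.
    by apply: ler_sum => k _; apply: ler_sum => l lk; apply: Hpt.
  rewrite (bigD1 j) //= [X in _ < X](bigD1 j) //=.
  apply: ltr_leD; first by apply: et_lt => //; rewrite dG // eq_sym.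
  by apply: ler_sum => l /andP [lk _]; apply: Hpt.
- move=> G i j dG ji.
  rewrite (@div_fin _ gamma _ D _ G dG) /energy_div.
  set G2 := (fun k : 'I_N => if k == i then G j else G k).
  have -> : (\sum_(k < N) \sum_(l < N | l != k) energy_term gamma (D (G2 k) (G2 l)))
             = +oo%E.
    rewrite (bigD1 i) //= (bigD1 j) //= /G2 eqxx (negbTE ji) D0.
    rewrite {1}/energy_term eqxx.
    apply: addyy2.
      by apply: sume_ge0 => l _; apply: et_ge0.
    by apply: sume_ge0 => k _; apply: sume_ge0 => l _; apply: et_ge0.
  rewrite gt0_muley; last by rewrite lte_fin.
  exact: ltNyr.
Qed.
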